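(* Let $\mathcal{C}_n$ be the set of real symmetric positive-semidefinite $n\times n$ matrices $\mathbf{C}$ with spectral radius $\rho(\mathbf{C})\le1$, and let $\mathbf{y}_0,\mathbf{y}_1\in\mathbb{R}^n$. Then $$\{\mathbf{C}\mathbf{y}_0+(\mathbf{I}_n-\mathbf{C})\mathbf{y}_1:\mathbf{C}\in\mathcal{C}_n\}=\Big\{\mathbf{y}\in\mathbb{R}^n:\Big\|\mathbf{y}-\tfrac{\mathbf{y}_0+\mathbf{y}_1}{2}\Big\|_2\le\tfrac12\|\mathbf{y}_1-\mathbf{y}_0\|_2\Big\},$$ i.e. the closed Euclidean ball centered at $(\mathbf{y}_0+\mathbf{y}_1)/2$ with radius $\frac12\|\mathbf{y}_1-\mathbf{y}_0\|_2$.
   Context: $\|\cdot\|_2$ is the Euclidean norm; $\mathbf{I}_n$ is the $n\times n$ identity matrix; $\rho(\mathbf{C})$ is the spectral radius (largest absolute value of an eigenvalue). *)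

(* Defs.v *)
From HB Require Import structures.
From mathcomp Require Import all_boot all_order all_algebra.
From mathcomp Require Import complex.
Set Implicit Arguments. Unset Strict Implicit. Unset Printing Implicit Defensive.
Import Order.TTheory GRing.Theory Num.Theory.
Local Open Scope ring_scope.

Definition norm2 (R : rcfType) (n : nat) (v : 'cV[R]_n) : R :=
  Num.sqrt (\sum_(i < n) v i 0 ^+ 2).

Definition symmetric_mx (R : rcfType) (n : nat) (C : 'M[R]_n) : Prop := C^T = C.

Definition psd_mx (R : rcfType) (n : nat) (C : 'M[R]_n) : Prop :=
  forall x : 'cV[R]_n, 0 <= (x^T *m C *m x) 0 0.

Definition spectral_radius_le1 (R : rcfType) (n : nat) (C : 'M[R]_n) : Prop :=
  forall z : R[i], eigenvalue (map_mx (fun x : R => x%:C%C) C) z -> `|z| <= 1.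

Definition class_Cn (R : rcfType) (n : nat) (C : 'M[R]_n) : Prop :=
  [/\ symmetric_mx C, psd_mx C & spectral_radius_le1 C].

(* Main.v *)
Require Import Defs.
From HB Require Import structures.
From mathcomp Require Import all_boot all_order all_algebra.
From mathcomp Require Import complex.
From mathcomp Require Import spectral sesquilinear.
Import Order.TTheory GRing.Theory Num.Theory.
Local Open Scope ring_scope.

Section S.
Variable R : rcfType.
Local Notation rc := (real_complex R).

Lemma decompC n (u : 'rV[R[i]]_n) :
  u = map_mx rc (map_mx (@complex.Re R) u) + 'i%C *: map_mx rc (map_mx (@complex.Im R) u).
Proof.
apply/matrixP => i j; rewrite !mxE; case: (u i j) => a b.
by apply/eqP; rewrite eq_complex /= !mul0r !mul1r !subr0 !addr0 !add0r !eqxx.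
Qed.

Lemma decompCt n (u : 'rV[R[i]]_n) :
  map_mx Num.conj u^T = (map_mx rc (map_mx (@complex.Re R) u))^T - 'i%C *: (map_mx rc (map_mx (@complex.Im R) u))^T.
Proof.
apply/matrixP => i j; rewrite !mxE; case: (u j i) => a b.
by apply/eqP; rewrite eq_complex /= !(mul0r, mul1r, mulr0, oppr0, subr0, sub0r, add0r, addr0, eqxx).
Qed.
End S.

Section S2.
Variable R : rcfType.
Local Notation rc := (real_complex R).

Lemma mxaddE m n (M N : 'M[R[i]]_(m,n)) i j : (M + N) i j = M i j + N i j.
Proof. by rewrite mxE. Qed.
Lemma mxsubE m n (M N : 'M[R[i]]_(m,n)) i j : (M - N) i j = M i j - N i j.
Proof. by rewrite !mxE. Qed.
Lemma mxoppE m n (M : 'M[R[i]]_(m,n)) i j : (- M) i j = - M i j.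
Proof. by rewrite mxE. Qed.
Lemma mxscaleE m n (c : R[i]) (M : 'M[R[i]]_(m,n)) i j : (c *: M) i j = c * M i j.
Proof. by rewrite mxE. Qed.

Lemma scal_tr n (M : 'M[R[i]]_(1,n)) (N : 'M[R[i]]_(n,1)) : (M *m N) 0 0 = ((M *m N)^T) 0 0.
Proof. by rewrite [RHS]mxE. Qed.

Lemma psdC n (C : 'M[R]_n) : symmetric_mx C -> psd_mx C ->
  forall u : 'rV[R[i]]_n, 0 <= (u *m map_mx rc C *m map_mx Num.conj u^T) 0 0.
Proof.
move=> Cs Cp u.
rewrite decompCt {1}[u]decompC.
set ar := map_mx _ u; set br := map_mx _ u.
have qf (v : 'rV[R]_n) : (map_mx rc v *m map_mx rc C *m (map_mx rc v)^T) 0 0 = rc ((v *m C *m v^T) 0 0).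
  by rewrite map_trmx -!map_mxM mxE.
have qp (v : 'rV[R]_n) : 0 <= (map_mx rc v *m map_mx rc C *m (map_mx rc v)^T) 0 0.
  by rewrite qf ler0c; have := Cp v^T; rewrite trmxK.
have cr : (map_mx rc br *m map_mx rc C *m (map_mx rc ar)^T) 0 0 =
          (map_mx rc ar *m map_mx rc C *m (map_mx rc br)^T) 0 0.
  by rewrite -mulmxA scal_tr !trmx_mul trmxK [(map_mx _ C)^T]map_trmx Cs.
set a := map_mx rc ar; set b := map_mx rc br; set A := map_mx rc C.
have -> : (a + 'i%C *: b) *m A *m (a^T - 'i%C *: b^T) =
   (a *m A *m a^T + b *m A *m b^T) + 'i%C *: (b *m A *m a^T - a *m A *m b^T).
  rewrite !(mulmxDl, mulmxDr, mulmxN, mulmxBr, mulmxBl) -!scalemxAl -!scalemxAr !scalerA.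
  rewrite -expr2 sqr_i scaleN1r opprK scalerBr.
  set X := a *m A *m a^T. set Z := b *m A *m b^T.
  set Y1 := b *m A *m a^T. set Y2 := a *m A *m b^T.
  by rewrite [- _ + Z]addrC addrACA.
have hX := qp ar; have hZ := qp br.
set X := a *m A *m a^T. set Z := b *m A *m b^T.
set Y1 := b *m A *m a^T. set Y2 := a *m A *m b^T.
rewrite !(mxaddE, mxoppE, mxscaleE) cr /Y2 subrr mulr0 addr0.
exact: addr_ge0.
Qed.
End S2.

Section S3.
Variable R : rcfType.
Local Notation rc := (real_complex R).
Local Open Scope sesquilinear_scope.

Lemma adjA n (C : 'M[R]_n) : symmetric_mx C -> (map_mx rc C)^t* = map_mx rc C.
Proof.
move=> Cs; apply/matrixP => i j; rewrite !mxE.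
have -> : C j i = C^T i j by rewrite mxE.
by rewrite Cs; apply: conjc_real.
Qed.

Lemma core n (C : 'M[R]_n) : class_Cn C ->
  forall d : 'cV[R]_n, 0 <= (d^T *m (C - C *m C) *m d) 0 0.
Proof.
case=> Cs Cp Ce d.
set A := map_mx rc C.
have An : A \is normalmx by apply/normalmxP; rewrite adjA.
have AE := orthomx_spectralP An.
set P := spectralmx A in AE; set D := spectral_diag A in AE.
have Pu : P \is unitarymx by apply: spectral_unitarymx.
have PP : P *m P^t* = 1%:M by apply/unitarymxP.
rewrite invmx_unitary // in AE.
have Dge : forall j, 0 <= D 0 j /\ D 0 j <= 1.
  move=> j; set v := row j P.
  have vA : v *m A = D 0 j *: v.
    rewrite AE /v !mulmxA -row_mul PP row1 mul_mx_diag.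
    rewrite rowE scalemxAl; congr (_ *m _); apply/matrixP => a b; rewrite !mxE mulrC.
    case: (eqVneq b j) => [->//|/negbTE nb]. by rewrite andbF !mulr0.
  have vv : (v *m v^t*) 0 0 = 1.
    by have := (row_unitarymxP Pu) j j; rewrite dotmxE eqxx.
  have D0 : 0 <= D 0 j.
    have -> : D 0 j = ((v *m A) *m v^t*) 0 0.
      by rewrite vA -scalemxAl mxE vv mulr1.
    exact: psdC.
  split => //.
  have vnz : v != 0.
    by apply/eqP => v0; move: vv; rewrite v0 mul0mx mxE => /eqP; rewrite eq_sym oner_eq0.
  have := Ce (D 0 j); rewrite ger0_norm //; apply.
  by apply/eigenvalueP; exists v.
set E := \row_j (D 0 j - D 0 j * D 0 j).
have ME : diag_mx D - diag_mx D *m diag_mx D = diag_mx E.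
  rewrite mulmx_diag; apply/matrixP => a b; rewrite !mxE.
  by case: (eqVneq a b) => [->|_]; rewrite ?mulr1n ?mulr0n ?subr0.
have AAE : A - A *m A = P^t* *m diag_mx E *m P.
  rewrite -ME {1 2 3}AE !mulmxA -[P^t* *m diag_mx D *m P *m P^t*]mulmxA PP mulmx1.
  by rewrite mulmxBr mulmxBl !mulmxA.
set w := map_mx rc d^T.
have wt : w^t* = map_mx rc d.
  by apply/matrixP => a b; rewrite !mxE; apply: conjc_real.
rewrite -ler0c.
have -> : rc ((d^T *m (C - C *m C) *m d) 0 0) = (w *m (A - A *m A) *m w^t*) 0 0.
  by rewrite wt /w /A -map_mxM -map_mxB -!map_mxM [RHS]mxE.
rewrite AAE.
set x := w *m P^t*.
have -> : w *m (P^t* *m diag_mx E *m P) *m w^t* = x *m diag_mx E *m x^t*.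
  have xt : x^t* = P *m w^t* by rewrite /x trmx_mul map_mxM trmxCK.
  by rewrite xt /x !mulmxA.
rewrite mul_mx_diag mxE; apply: sumr_ge0 => j _; rewrite !mxE mulrAC.
apply: mulr_ge0; first exact: mul_conjC_ge0.
by have [h1 h2] := Dge j; rewrite subr_ge0 -{3}[D 0 j]mulr1; apply: ler_wpM2l.
Qed.
End S3.

From mathcomp Require Import ring.
Section S4.
Variable R : rcfType.

Lemma ball n (y y0 y1 : 'cV[R]_n) :
  (norm2 (y - 2^-1 *: (y0 + y1)) <= 2^-1 * norm2 (y1 - y0)) =
  (((y1 - y)^T *m (y1 - y)) 0 0 <= ((y1 - y)^T *m (y1 - y0)) 0 0).
Proof.
rewrite /norm2.
set S := \sum_(i < n) (y1 - y0) i 0 ^+ 2.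
have S0 : 0 <= S by apply: sumr_ge0 => i _; apply: sqr_ge0.
have -> : 2^-1 * Num.sqrt S = Num.sqrt (2^-1 ^+ 2 * S).
  by rewrite sqrtrM ?sqrtr_sqr ?ger0_norm ?invr_ge0 ?ler0n // sqr_ge0.
rewrite ler_sqrt; last by apply: mulr_ge0 => //; apply: sqr_ge0.
rewrite -subr_ge0 -[X in _ = X]subr_ge0; congr (_ <= _).
rewrite /S !mxE mulr_sumr -!sumrB; apply: eq_bigr => i _; rewrite !mxE.
by field.
Qed.
End S4.

Lemma mxsubG (T : pzRingType) m n (M N : 'M[T]_(m,n)) i j : (M - N) i j = M i j - N i j.
Proof. by rewrite !mxE. Qed.

Lemma fwd (R : rcfType) (n : nat) (y0 y1 : 'cV[R]_n) C :
  class_Cn C ->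
  norm2 ((C *m y0 + (1%:M - C) *m y1) - 2^-1 *: (y0 + y1)) <= 2^-1 * norm2 (y1 - y0).
Proof.
move=> hC; rewrite ball.
have -> : y1 - (C *m y0 + (1%:M - C) *m y1) = C *m (y1 - y0).
  by rewrite mulmxBl mul1mx !mulmxBr opprD opprB addrCA [y1 + _]addrCA subrr addr0 addrC.
set d := y1 - y0; clearbody d.
case: hC => Cs Cp Ce.
rewrite trmx_mul Cs -subr_ge0.
have := @core R n C (And3 Cs Cp Ce) d.
by rewrite mulmxBr mulmxBl mxsubG !mulmxA.
Qed.

Lemma trZ (T : pzRingType) m n (a : T) (M : 'M[T]_(m,n)) : (a *: M)^T = a *: M^T.
Proof. by apply/matrixP => i j; rewrite !mxE. Qed.

Lemma mxscaleG (T : pzRingType) m n (a : T) (M : 'M[T]_(m,n)) i j : (a *: M) i j = a * M i j.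
Proof. by rewrite mxE. Qed.

Lemma idC (R : rcfType) n (y0 y1 : 'cV[R]_n) (C : 'M[R]_n) :
  C *m y0 + (1%:M - C) *m y1 = y1 - C *m (y1 - y0).
Proof.
have h : y1 - (C *m y0 + (1%:M - C) *m y1) = C *m (y1 - y0).
  by rewrite mulmxBl mul1mx !mulmxBr opprD opprB addrCA [y1 + _]addrCA subrr addr0 addrC.
by rewrite -h opprD opprK addrA subrr add0r.
Qed.

Lemma sq11 (R : rcfType) n (c : 'cV[R]_n) : 0 <= (c^T *m c) 0 0.
Proof. by rewrite mxE; apply: sumr_ge0 => j _; rewrite mxE -expr2 sqr_ge0. Qed.

Lemma sq11_0 (R : rcfType) n (c : 'cV[R]_n) : (c^T *m c) 0 0 = 0 -> c = 0.
Proof.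
rewrite mxE => h; apply/matrixP => i j; rewrite ord1 mxE.
have nn : forall k : 'I_n, true -> 0 <= c^T 0 k * c k 0.
  by move=> k _; rewrite mxE -expr2 sqr_ge0.
have := @psumr_eq0P _ _ _ _ nn h i isT.
by rewrite mxE -expr2 => /eqP; rewrite sqrf_eq0 => /eqP.
Qed.

Lemma rank1_eig (R : rcfType) n (c : 'cV[R]_n) (s : R) :
  (c^T *m c) 0 0 <= s -> spectral_radius_le1 (s^-1 *: (c *m c^T)).
Proof.
move=> hs z /eigenvalueP [v vA vnz].
set c' := map_mx (real_complex R) c.
have ME : map_mx (fun x : R => x%:C%C) (s^-1 *: (c *m c^T)) = (s^-1)%:C%C *: (c' *m c'^T).
  change (map_mx (real_complex R) (s^-1 *: (c *m c^T)) = (s^-1)%:C%C *: (c' *m c'^T)).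
  by rewrite map_mxZ map_mxM -map_trmx.
rewrite ME in vA.
set al := (v *m c') 0 0.
have E1 : z *: v = ((s^-1)%:C%C * al) *: c'^T.
  rewrite -vA -scalemxAr mulmxA [v *m c']mx11_scalar mul_scalar_mx scalerA.
  by rewrite mulrC.
have E2 : z * al = (s^-1)%:C%C * al * (real_complex R) ((c^T *m c) 0 0).
  have := congr1 (fun M => (M *m c') 0 0) E1; rewrite /= -!scalemxAl !mxscaleG => ->.
  by rewrite /c' map_trmx -map_mxM mxE.
have q0 := @sq11 R n c.
have s0 : 0 <= s := le_trans q0 hs.
have [al0|alnz] := eqVneq al 0.
  move: E1; rewrite al0 mulr0 scale0r => /eqP; rewrite scaler_eq0 (negbTE vnz) orbF => /eqP ->.
  by rewrite normr0 ler01.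
have -> : z = (s^-1 * (c^T *m c) 0 0)%:C%C.
  apply: (mulIf alnz); rewrite E2 rmorphM /=.
  by rewrite mulrAC.
have r0 : 0 <= s^-1 * (c^T *m c) 0 0 by apply: mulr_ge0; rewrite ?invr_ge0.
rewrite ger0_norm ?ler0c // -[1]/((1:R)%:C%C) lecR.
have [->|snz] := eqVneq s 0; first by rewrite invr0 mul0r ler01.
by rewrite mulrC ler_pdivrMr ?mul1r // lt_neqAle eq_sym snz.
Qed.

Lemma bwd (R : rcfType) (n : nat) (y0 y1 y : 'cV[R]_n) :
  norm2 (y - 2^-1 *: (y0 + y1)) <= 2^-1 * norm2 (y1 - y0) ->
  exists C : 'M[R]_n, class_Cn C /\ y = C *m y0 + (1%:M - C) *m y1.
Proof.
rewrite ball.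
have yE : y = y1 - (y1 - y) by rewrite opprB addrC subrK.
move: yE; set c := y1 - y; set d := y1 - y0; clearbody c => yE H.
set s := (c^T *m d) 0 0.
have q0 := @sq11 R n c.
have s0 : 0 <= s := le_trans q0 H.
exists (s^-1 *: (c *m c^T)); split; first split.
- by rewrite /symmetric_mx trZ trmx_mul trmxK.
- move=> x; rewrite -scalemxAr -scalemxAl mxscaleG; apply: mulr_ge0; first by rewrite invr_ge0.
  have -> : x^T *m (c *m c^T) *m x = (c^T *m x)^T *m (c^T *m x).
    by rewrite trmx_mul trmxK !mulmxA.
  exact: sq11.
- exact: rank1_eig.
- rewrite idC -/d -scalemxAl -mulmxA [c^T *m d]mx11_scalar -/s mul_mx_scalar scalerA.
  have [s00|snz] := eqVneq s 0.
    have c0 : c = 0 by apply: sq11_0; apply/le_anti; rewrite q0 -s00 H.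
    by rewrite yE c0 scaler0.
  by rewrite mulVf // scale1r.
Qed.

Theorem lemma5 (R : rcfType) (n : nat) (y0 y1 : 'cV[R]_n) :
  forall y : 'cV[R]_n,
    (exists C : 'M[R]_n, class_Cn C /\ y = C *m y0 + (1%:M - C) *m y1) <->
    norm2 (y - 2^-1 *: (y0 + y1)) <= 2^-1 * norm2 (y1 - y0).
Proof.
move=> y; split; last exact: bwd.
by case=> C [hC ->]; apply: fwd.
Qed.
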